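(* Let $p\ge1$, $\sigma^2>0$, $\boldsymbol\beta\in\mathbb{R}^p$ not identically zero with $\beta_1\le\cdots\le\beta_p$, $\delta_1^2,\dots,\delta_p^2>0$, $\sum_{i=1}^p\beta_i/\delta_i^2\ge0$, and $\Sigma=\sigma^2\boldsymbol\beta\boldsymbol\beta^\top+\mathrm{diag}(\delta_1^2,\dots,\delta_p^2)$. Let $w^L$ be the solution of $\min_w w^\top\Sigma w$ subject to $w^\top\mathbf{1}_p=1$, $w\ge0$, let $K=\{i:w^L_i>0\}$ and $k=|K|$, and suppose $k<p$. Suppose $q>0$ additional assets are added, with betas $\beta_{p+1},\dots,\beta_{p+q}$ and idiosyncratic variances $\delta_{p+1}^2,\dots,\delta_{p+q}^2>0$, giving the enlarged covariance matrix $\Sigma'=\sigma^2\boldsymbol\beta'\boldsymbol\beta'^\top+\mathrm{diag}(\delta_1^2,\dots,\delta_{p+q}^2)$ on $p+q$ assets. If $\beta_{p+m}\ge\beta_{k+1}$ for all $m=1,\dots,q$, then the long-only minimum variance portfolio of the enlarged market has the same active set $K$, and the weights of the assets in $K$ are the same as in $w^L$ (all added assets receive weight zero).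
   Context: The long-only minimum variance portfolio for a positive definite covariance $\Sigma$ on $n$ assets is the unique minimizer of $w^\top\Sigma w$ over $w\in\mathbb{R}^n$ with $\sum_i w_i=1$, $w_i\ge0$. Its active set is the set of indices with strictly positive weight. *)

(* Defs.v *)
From HB Require Import structures.
From mathcomp Require Import all_boot all_order all_algebra.
Set Implicit Arguments. Unset Strict Implicit. Unset Printing Implicit Defensive.
Import Order.TTheory GRing.Theory Num.Theory.
Local Open Scope ring_scope.

Definition factor_cov (R : realFieldType) (n : nat) (s2 : R)
  (b d2 : 'I_n -> R) : 'M[R]_n :=
  s2 *: (\col_i b i *m \row_j b j) + diag_mx (\row_i d2 i).

Definition pvar (R : realFieldType) (n : nat) (S : 'M[R]_n) (w : 'cV[R]_n) : R :=
  (w^T *m S *m w) 0 0.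

Definition long_only (R : realFieldType) (n : nat) (w : 'cV[R]_n) : Prop :=
  \sum_i w i 0 = 1 /\ forall i, 0 <= w i 0.

Definition lo_mvp (R : realFieldType) (n : nat) (S : 'M[R]_n) (w : 'cV[R]_n) : Prop :=
  long_only w /\ forall v : 'cV[R]_n, long_only v -> pvar S w <= pvar S v.

Definition active_set (R : realFieldType) (n : nat) (w : 'cV[R]_n) : {set 'I_n} :=
  [set i | 0 < w i 0].

Definition catf (T : Type) (p q : nat) (f : 'I_p -> T) (g : 'I_q -> T)
  : 'I_(p + q) -> T :=
  fun i => match split i with inl j => f j | inr m => g m end.

Definition pad0 (R : realFieldType) (p q : nat) (w : 'cV[R]_p) : 'cV[R]_(p + q) :=
  \col_i catf (fun j => w j 0) (fun _ : 'I_q => 0) i.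

(* Main.v *)
Require Import Defs.
From HB Require Import structures.
From mathcomp Require Import all_boot all_order all_algebra.
From mathcomp Require Import ring lra.
Import Order.TTheory GRing.Theory Num.Theory.
Local Open Scope ring_scope.

Lemma catfL (T : Type) p q (f : 'I_p -> T) (g : 'I_q -> T) i :
  catf f g (lshift q i) = f i.
Proof. by rewrite /catf (unsplitK (inl _ i)). Qed.
Lemma catfR (T : Type) p q (f : 'I_p -> T) (g : 'I_q -> T) i :
  catf f g (rshift p i) = g i.
Proof. by rewrite /catf (unsplitK (inr _ i)). Qed.

Set Implicit Arguments.
Section Quad.
Variables (R : realFieldType) (n : nat) (s2 : R) (b d : 'I_n -> R).

Definition dotf (f : 'I_n -> R) := \sum_i b i * f i.
Definition Qf (f : 'I_n -> R) := s2 * dotf f ^+ 2 + \sum_i d i * f i ^+ 2.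
Definition gf (f : 'I_n -> R) i := s2 * b i * dotf f + d i * f i.

Lemma factor_cov_E i j : factor_cov s2 b d i j = s2 * (b i * b j) + d i *+ (i == j).
Proof. by rewrite /factor_cov !mxE big_ord1 !mxE. Qed.

Lemma pvarE (w : 'cV[R]_n) : pvar (factor_cov s2 b d) w = Qf (fun i => w i 0).
Proof.
rewrite /pvar mxE /Qf.
have -> : \sum_j (w^T *m factor_cov s2 b d) 0 j * w j 0 =
   \sum_j (s2 * dotf (fun i => w i 0) * (b j * w j 0) + d j * w j 0 ^+ 2).
  apply: eq_bigr => j _; rewrite mxE.
  under eq_bigr => k _ do rewrite mxE factor_cov_E mulrDr.
  rewrite big_split /=.
  have -> : \sum_(i < n) w i 0 * (d i *+ (i == j)) = w j 0 * d j.
    rewrite (bigD1 j) //= big1 ?eqxx ?mulr1n ?addr0 // => k kj.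
    by rewrite (negbTE kj) mulr0n mulr0.
  have -> : \sum_(i < n) w i 0 * (s2 * (b i * b j)) = s2 * b j * dotf (fun i => w i 0).
    by rewrite /dotf mulr_sumr; apply: eq_bigr => i _; ring.
  ring.
rewrite big_split /= -mulr_sumr; congr (_ + _); rewrite /dotf; ring.
Qed.

Lemma QfE f : Qf f = \sum_i f i * gf f i.
Proof.
rewrite /Qf /gf.
have -> : \sum_i f i * (s2 * b i * dotf f + d i * f i) =
  \sum_i (s2 * dotf f) * (b i * f i) + \sum_i d i * f i ^+ 2.
  by rewrite -big_split; apply: eq_bigr => i _ /=; ring.
by rewrite -mulr_sumr /dotf; ring.
Qed.

Lemma Qf_add f h : Qf (fun i => f i + h i) = Qf f + 2 * \sum_i h i * gf f i + Qf h.
Proof.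
have ed : dotf (fun i => f i + h i) = dotf f + dotf h.
  by rewrite /dotf -big_split; apply: eq_bigr => i _ /=; ring.
have e1 : \sum_i d i * (f i + h i) ^+ 2 =
   \sum_i d i * f i ^+ 2 + 2 * \sum_i d i * f i * h i + \sum_i d i * h i ^+ 2.
  rewrite mulr_sumr -!big_split; apply: eq_bigr => i _ /=; ring.
have e2 : \sum_i h i * gf f i = s2 * dotf f * dotf h + \sum_i d i * f i * h i.
  rewrite /gf /dotf mulr_sumr -big_split; apply: eq_bigr => i _ /=; ring.
rewrite /Qf ed e1 e2; ring.
Qed.

Lemma Qf_scale t h : Qf (fun i => t * h i) = t ^+ 2 * Qf h.
Proof.
have e1 : \sum_i b i * (t * h i) = t * \sum_i b i * h i.
  by rewrite mulr_sumr; apply: eq_bigr => i _; ring.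
have e2 : \sum_i d i * (t * h i) ^+ 2 = t ^+ 2 * \sum_i d i * h i ^+ 2.
  by rewrite mulr_sumr; apply: eq_bigr => i _; ring.
rewrite /Qf /dotf e1 e2; ring.
Qed.

Hypotheses (hs2 : 0 <= s2) (hd : forall i, 0 < d i).

Lemma Qf_ge h : \sum_i d i * h i ^+ 2 <= Qf h.
Proof. by rewrite /Qf lerDr mulr_ge0 // sqr_ge0. Qed.

Lemma Qf_ge0 h : 0 <= Qf h.
Proof.
apply: le_trans (Qf_ge h); apply: sumr_ge0 => i _.
by rewrite mulr_ge0 ?sqr_ge0 // ltW.
Qed.

Lemma Qf_ext f g : (forall i, f i = g i) -> Qf f = Qf g.
Proof.
move=> e; rewrite /Qf /dotf.
by congr (_ * _ ^+ 2 + _); apply: eq_bigr => i _; rewrite e.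
Qed.

Lemma kkt (w : 'cV[R]_n) : lo_mvp (factor_cov s2 b d) w ->
  forall i, Qf (fun j => w j 0) <= gf (fun j => w j 0) i.
Proof.
move=> [[hsum hpos] hopt] i.
set f := fun j => w j 0.
rewrite leNgt; apply/negP => hlt.
set a := Qf f - gf f i.
have ha : 0 < a by rewrite subr_gt0.
set h := fun j : 'I_n => (j == i)%:R - f j.
set C := Qf h.
have hC : 0 <= C := Qf_ge0 h.
have haC : 0 < a + C by rewrite ltr_wpDr.
set t := a / (a + C).
have ht0 : 0 < t by rewrite divr_gt0.
have htC : t * (a + C) = a by rewrite /t mulfVK // gt_eqF.
have ht1 : t <= 1 by nra.
have hdelta : \sum_j ((j == i)%:R : R) = 1.
  rewrite (bigD1 i) //= eqxx big1 ?addr0 // => j ji.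
  by rewrite (negbTE ji).
have hsumh : \sum_j h j * gf f j = - a.
  rewrite /h.
  have -> : \sum_j ((j == i)%:R - f j) * gf f j =
     \sum_j ((j == i)%:R * gf f j) - \sum_j f j * gf f j.
    by rewrite -sumrB; apply: eq_bigr => j _; ring.
  rewrite -QfE (bigD1 i) //= eqxx mul1r big1 ?addr0 => [|j ji]; last first.
    by rewrite (negbTE ji) mul0r.
  by rewrite /a opprB.
set v : 'cV[R]_n := \col_j (f j + t * h j).
have hv : long_only v.
  split.
  - have -> : \sum_j v j 0 = \sum_j f j + t * (\sum_j ((j == i)%:R : R) - \sum_j f j).
      rewrite -sumrB mulr_sumr -big_split; apply: eq_bigr => j _.
      by rewrite mxE.
    by rewrite hdelta /f hsum subrr mulr0 addr0.
  - move=> j; rewrite mxE /h /f; have := hpos j.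
    case: (j == i) => /= hj; nra.
have := hopt v hv; rewrite !pvarE.
rewrite (@Qf_ext (fun j => v j 0) (fun j => f j + t * h j)) => [|j]; last by rewrite mxE.
rewrite Qf_add Qf_scale -/f -/C.
have -> : \sum_j t * h j * gf f j = t * (- a).
  by rewrite -hsumh mulr_sumr; apply: eq_bigr => j _; ring.
have htC' : t * C = a - t * a by rewrite -[X in X - _]htC; ring.
have h1 : 0 < t * a by rewrite mulr_gt0.
have h2 : 0 < t * (t * a) by rewrite mulr_gt0.
nra.
Qed.

Lemma suff_opt (w : 'cV[R]_n) : long_only w ->
  (forall i, Qf (fun j => w j 0) <= gf (fun j => w j 0) i) ->
  lo_mvp (factor_cov s2 b d) w /\ (forall w', lo_mvp (factor_cov s2 b d) w' -> w' = w).
Proof.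
move=> hw hg.
set f := fun j => w j 0.
have key : forall v : 'cV[R]_n, long_only v ->
    Qf f + Qf (fun j => v j 0 - f j) <= Qf (fun j => v j 0).
  move=> v [hs hp].
  rewrite [X in _ <= X](@Qf_ext (fun j => v j 0) (fun j => f j + (v j 0 - f j))) => [|j]; last first.
    by rewrite addrC subrK.
  rewrite [X in _ <= X]Qf_add.
  suff : 0 <= \sum_j (v j 0 - f j) * gf f j  by move=> HH; lra.
  have -> : \sum_j (v j 0 - f j) * gf f j =
     \sum_j v j 0 * gf f j - \sum_j f j * gf f j.
    by rewrite -sumrB; apply: eq_bigr => j _; ring.
  rewrite -QfE.
  have : Qf f * \sum_j v j 0 <= \sum_j v j 0 * gf f j.
    rewrite mulr_sumr; apply: ler_sum => j _.
    by rewrite mulrC ler_wpM2l.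
  rewrite hs mulr1 => hle.
  by lra.
split.
  split=> // v hv; rewrite !pvarE.
  apply: le_trans (key v hv); by rewrite lerDl Qf_ge0.
move=> w' [hw' hopt].
have := hopt w hw; rewrite !pvarE => hle.
have := key w' hw'.
move=> hk.
have hQ : Qf (fun j => w' j 0 - f j) <= 0.
  by rewrite -(lerD2l (Qf f)) addr0 (le_trans hk).
have hS := le_trans (Qf_ge _) hQ.
have h0 : forall j, true -> 0 <= d j * (w' j 0 - f j) ^+ 2.
  by move=> j _; rewrite mulr_ge0 ?sqr_ge0 // ltW.
have hS0 : \sum_j d j * (w' j 0 - f j) ^+ 2 = 0.
  by apply/eqP; rewrite eq_le hS sumr_ge0.
apply/matrixP => j k; rewrite (ord1 k).
have := (psumr_eq0P h0 hS0) j isT.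
move/eqP; rewrite mulf_eq0 (gt_eqF (hd j)) /= sqrf_eq0 subr_eq0.
by move/eqP.
Qed.

End Quad.
Unset Implicit Arguments.
Arguments dotf {R n}.
Arguments Qf {R n}.
Arguments gf {R n}.

Theorem corollary1 (R : realFieldType) (p q : nat) (s2 : R)
  (beta d2 : 'I_p -> R) (beta_new d2_new : 'I_q -> R) (wL : 'cV[R]_p)
  (hp : (0 < p)%N) (hq : (0 < q)%N) (hs2 : 0 < s2)
  (hbeta_nz : exists i, beta i != 0)
  (hsorted : forall i j : 'I_p, (i <= j)%N -> beta i <= beta j)
  (hd2 : forall i, 0 < d2 i)
  (hsum : 0 <= \sum_i beta i / d2 i)
  (hwL : lo_mvp (factor_cov s2 beta d2) wL)
  (hk : (#|active_set wL| < p)%N)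
  (hd2_new : forall m, 0 < d2_new m)
  (hbeta_new : forall m : 'I_q, beta (Ordinal hk) <= beta_new m) :
  lo_mvp (factor_cov s2 (catf beta beta_new) (catf d2 d2_new)) (pad0 q wL) /\
  (forall w' : 'cV[R]_(p + q),
     lo_mvp (factor_cov s2 (catf beta beta_new) (catf d2 d2_new)) w' ->
     w' = pad0 q wL).
Proof.
have hs2' : 0 <= s2 := ltW hs2.
have hkkt := kkt hs2' hd2 hwL.
have [[hsumw hposw] _] := hwL.
set f := fun j => wL j 0.
set mu := Qf s2 beta d2 f.
set B := dotf beta f.
have heq : forall i, 0 < f i -> gf s2 beta d2 f i = mu.
  have h0 : forall i, true -> 0 <= f i * (gf s2 beta d2 f i - mu).
    by move=> i _; rewrite mulr_ge0 ?hposw // subr_ge0; apply: hkkt.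
  have hS : \sum_i f i * (gf s2 beta d2 f i - mu) = 0.
    have -> : \sum_i f i * (gf s2 beta d2 f i - mu) =
       \sum_i f i * gf s2 beta d2 f i - mu * \sum_i f i.
      by rewrite mulr_sumr -sumrB; apply: eq_bigr => i _; ring.
    by rewrite -QfE hsumw mulr1 subrr.
  move=> i hi; have := (psumr_eq0P h0 hS) i isT.
  by move/eqP; rewrite mulf_eq0 (gt_eqF hi) /= subr_eq0 => /eqP.
have [i0 hi0] : exists i, 0 < f i.
  case: (pickP (fun i => 0 < f i)) => [i hi|hn]; first by exists i.
  have : \sum_i f i <= \sum_(i < p) (0:R).
    by apply: ler_sum => i _; rewrite leNgt hn.
  by rewrite big1_eq hsumw ler10.
have hmu : 0 < mu.
  rewrite /mu /Qf; apply: lt_le_trans (_ : d2 i0 * f i0 ^+ 2 <= _).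
    by rewrite mulr_gt0 // exprn_gt0.
  rewrite (bigD1 i0) //=.
  have h1 : 0 <= \sum_(i < p | i != i0) d2 i * f i ^+ 2.
    by apply: sumr_ge0 => i _; rewrite mulr_ge0 ?sqr_ge0 // ltW.
  have h2 := mulr_ge0 hs2' (sqr_ge0 (dotf beta f)).
  lra.
have [j0 hj0] : exists j, f j = 0.
  case: (pickP (fun i => f i == 0)) => [i /eqP hi|hn]; first by exists i.
  have : [set: 'I_p] \subset active_set wL.
    by apply/subsetP => i _; rewrite inE lt_def hn hposw.
  move/subset_leq_card; rewrite cardsT card_ord => hh.
  by have := hk; rewrite ltnNge hh.
have hB : 0 < B.
  rewrite ltNge; apply/negP => hB.
  have term : forall i, 0 <= beta i * f i - mu * (beta i / d2 i) /\
                        (f i = 0 -> 0 < beta i * f i - mu * (beta i / d2 i)).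
    move=> i.
    have hdi := hd2 i.
    have e : beta i * f i - mu * (beta i / d2 i) =
             beta i * (d2 i * f i - mu) / d2 i.
      by field; rewrite gt_eqF.
    rewrite e; have := hposw i; rewrite le_eqVlt => /orP [/eqP hz|hpos].
      have hz' : f i = 0 by rewrite /f -hz.
      have hg : mu <= s2 * beta i * B + d2 i * f i := hkkt i.
      rewrite hz' mulr0 addr0 in hg.
      have hbi : beta i < 0.
        rewrite ltNge; apply/negP => hb.
        have := mulr_ge0 hs2' hb; nra.
      have hpos : 0 < beta i * (d2 i * f i - mu) by rewrite hz' mulr0 sub0r; nra.
      by split => [|_]; [apply: ltW|]; apply: divr_gt0.
    have hg : s2 * beta i * B + d2 i * f i = mu := heq i hpos.
    have hnum : 0 <= beta i * (d2 i * f i - mu).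
      have -> : d2 i * f i - mu = - (s2 * beta i * B) by rewrite -hg; ring.
      have := mulr_ge0 hs2' (sqr_ge0 (beta i)); nra.
    split; first by apply: divr_ge0 => //; apply: ltW.
    move=> hz.
    have hz2 : wL i 0 = 0 := hz.
    by rewrite hz2 ltxx in hpos.
  have hsumT : \sum_i (beta i * f i - mu * (beta i / d2 i)) = B - mu * \sum_i beta i / d2 i.
    by rewrite sumrB -mulr_sumr.
  have : 0 < \sum_i (beta i * f i - mu * (beta i / d2 i)).
    rewrite (bigD1 j0) //=; apply: lt_le_trans (_ : _ <= _ + _).
      exact: ((term j0).2 hj0).
    by rewrite lerDl; apply: sumr_ge0 => i _; exact: (term i).1.
  rewrite hsumT => hh.
  have := mulr_ge0 (ltW hmu) hsum; lra.
set k := Ordinal hk.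
have hk0 : f k = 0.
  have := hposw k; rewrite le_eqVlt => /orP [/eqP hz|hpos]; first by rewrite /f -hz.
  exfalso.
  have hgk : s2 * beta k * B + d2 k * f k = mu := heq k hpos.
  have hall : forall j : 'I_p, (j <= k)%N -> 0 < f j.
    move=> j hjk; have := hposw j; rewrite le_eqVlt => /orP [/eqP hz|//].
    have hz' : f j = 0 by rewrite /f -hz.
    have hg : mu <= s2 * beta j * B + d2 j * f j := hkkt j.
    rewrite hz' mulr0 addr0 in hg.
    have hbb := hsorted _ _ hjk.
    have hsB : 0 < s2 * B by rewrite mulr_gt0.
    have hdd : 0 <= beta k - beta j by rewrite subr_ge0.
    have := mulr_ge0 (ltW hsB) hdd.
    have hdk : 0 < d2 k * f k := mulr_gt0 (hd2 k) hpos.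
    nra.
  have hsub : [set widen_ord hk x | x in 'I_(#|active_set wL|.+1)] \subset active_set wL.
    apply/subsetP => y /imsetP [x _ ->]; rewrite inE; apply: hall.
    by rewrite /= -ltnS.
  move/subset_leq_card: hsub; rewrite card_imset ?card_ord ?ltnn //.
  by move=> x y /(congr1 val) /= /val_inj.
have hF : forall j, (pad0 q wL) (lshift q j) 0 = f j.
  by move=> j; rewrite mxE catfL.
have hFr : forall m, (pad0 q wL) (rshift p m) 0 = 0.
  by move=> m; rewrite mxE catfR.
have hdot : dotf (catf beta beta_new) (fun j => pad0 q wL j 0) = B.
  rewrite /dotf big_split_ord /= [X in _ + X]big1 ?addr0 => [|m _]; last first.
    by rewrite hFr mulr0.
  by apply: eq_bigr => j _; rewrite hF catfL.
have hQ : Qf s2 (catf beta beta_new) (catf d2 d2_new) (fun j => pad0 q wL j 0) = mu.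
  rewrite /Qf hdot big_split_ord /= [X in _ + (_ + X)]big1 ?addr0 => [|m _]; last first.
    by rewrite hFr expr2 !mulr0.
  rewrite /mu /Qf -/B; congr (_ + _); apply: eq_bigr => j _; by rewrite hF catfL.
apply: suff_opt => //.
- by move=> i; case: (split_ordP i) => j ->; rewrite ?catfL ?catfR.
- split.
    rewrite big_split_ord /= [X in _ + X]big1 ?addr0 => [|m _]; last by rewrite hFr.
    by rewrite -hsumw; apply: eq_bigr => j _; rewrite hF.
  by move=> i; case: (split_ordP i) => j ->; rewrite ?hF ?hFr //; apply: hposw.
move=> i; rewrite hQ /gf hdot; case: (split_ordP i) => j ->.
  by rewrite !catfL hF; apply: hkkt.
rewrite !catfR hFr mulr0 addr0.
have hg : mu <= s2 * beta k * B + d2 k * f k := hkkt k.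
rewrite hk0 mulr0 addr0 in hg.
have hsB : 0 < s2 * B by rewrite mulr_gt0.
have hdd : 0 <= beta_new j - beta k by rewrite subr_ge0; apply: hbeta_new.
have := mulr_ge0 (ltW hsB) hdd.
nra.
Qed.
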